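(* Let $\mathscr T$ be a $\mathscr J$-theory, $A,B:\mathscr T\to\mathscr C$ $\mathscr T$-algebras, and $f:V\to\mathscr C(|A|,|B|)$ a morphism in $\mathscr V$. Then $f$ is valued in $\mathscr T$-homomorphisms from $A$ to $B$ if and only if $\Phi_{JI}\cdot f=\Psi_{JI}\cdot f$ for all objects $J$ of $\mathscr J$.
   Context: $(\mathscr V,\otimes,I)$ is a closed symmetric monoidal category, $\underline{\mathscr V}$ the associated $\mathscr V$-category; everything is $\mathscr V$-enriched. A system of arities is a full sub-$\mathscr V$-category $\mathscr J\hookrightarrow\underline{\mathscr V}$ containing $I$ and closed under $\otimes$. A cotensor $[V,C]$ is an object with counit $V\to\mathscr C([V,C],C)$ inducing $\mathscr C(-,[V,C])\cong\underline{\mathscr V}(V,\mathscr C(-,C))$. A $\mathscr J$-theory is a $\mathscr V$-category $\mathscr T$ with $\mathrm{ob}\,\mathscr T=\mathrm{ob}\,\mathscr J$ and an identity-on-objects $\tau:\mathscr J^{\mathrm{op}}\to\mathscr T$ preserving cotensors by objects of $\mathscr J$; $J$ is a cotensor $[J,I]$ with counit $\gamma_J:J\cong\underline{\mathscr V}(I,J)=\mathscr J^{\mathrm{op}}(J,I)\xrightarrow{\tau}\mathscr T(J,I)$. A $\mathscr T$-algebra in $\mathscr C$ is a $\mathscr V$-functor $A:\mathscr T\to\mathscr C$ preserving cotensors by objects of $\mathscr J$; carrier $|A|=AI$; $AJ$ is a cotensor of $|A|$ by $J$ with counit $J\xrightarrow{\gamma_J}\mathscr T(J,I)\xrightarrow{A_{JI}}\mathscr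 C(AJ,|A|)$. $\lambda_J:\mathscr C(|A|,|B|)\to\mathscr C(AJ,BJ)$ is the morphism induced by the cotensors $AJ=[J,|A|]$, $BJ=[J,|B|]$: the transpose $\mathscr C(|A|,|B|)\to\underline{\mathscr V}(J,\mathscr C(AJ,|B|))$ of ($J\otimes\mathscr C(|A|,|B|)\to\mathscr C(AJ,|A|)\otimes\mathscr C(|A|,|B|)\xrightarrow{c}\mathscr C(AJ,|B|)$, counit then composition) followed by the inverse of $\mathscr C(AJ,BJ)\cong\underline{\mathscr V}(J,\mathscr C(AJ,|B|))$. $\phi_{JK}=c\cdot(A_{JK}\otimes\lambda_K):\mathscr T(J,K)\otimes\mathscr C(|A|,|B|)\to\mathscr C(AJ,AK)\otimes\mathscr C(AK,BK)\to\mathscr C(AJ,BK)$ and $\psi_{JK}=c\cdot(B_{JK}\otimes\lambda_J):\mathscr T(J,K)\otimes\mathscr C(|A|,|B|)\to\mathscr C(BJ,BK)\otimes\mathscr C(AJ,BJ)\to\mathscr C(AJ,BK)$ ($c$ = composition); $\Phi_{JK},\Psi_{JK}:\mathscr C(|A|,|B|)\to\underline{\mathscr V}(\mathscr T(J,K),\mathscr C(AJ,BK))$ are their transposes. $f$ is valued in $\mathscr T$-homomorphisms from $A$ to $B$ if the family $\lambda_J\cdot f:V\to\mathscr C(AJ,BJ)$ is extraordinarily $\mathscr V$-natural in $J\in\mathscr T$ with respect to $\mathscr C(A-,B-):\mathscr T^{\mathrm{op}}\otimes\mathscr T\to\underline{\mathscr V}$. *)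

(* Defs.v *)
Record SMCCdata := {
  ob : Type;
  hom : ob -> ob -> Type;
  idm : forall X, hom X X;
  comp : forall X Y Z, hom Y Z -> hom X Y -> hom X Z;
  tens : ob -> ob -> ob;
  tensm : forall X X' Y Y', hom X X' -> hom Y Y' -> hom (tens X Y) (tens X' Y');
  unit : ob;
  assoc : forall X Y Z, hom (tens (tens X Y) Z) (tens X (tens Y Z));
  assoc_inv : forall X Y Z, hom (tens X (tens Y Z)) (tens (tens X Y) Z);
  lunit : forall X, hom (tens unit X) X;
  lunit_inv : forall X, hom X (tens unit X);
  runit : forall X, hom (tens X unit) X;
  runit_inv : forall X, hom X (tens X unit);
  sym : forall X Y, hom (tens X Y) (tens Y X);
  ihom : ob -> ob -> ob;
  ev : forall X Y, hom (tens X (ihom X Y)) Y;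
  curry : forall X Y Z, hom (tens X Z) Y -> hom Z (ihom X Y)
}.

Arguments hom {s} _ _.
Arguments idm {s} X.
Arguments comp {s X Y Z} _ _.
Arguments tens {s} _ _.
Arguments tensm {s X X' Y Y'} _ _.
Arguments unit {s}.
Arguments assoc {s X Y Z}.
Arguments assoc_inv {s X Y Z}.
Arguments lunit {s X}.
Arguments lunit_inv {s X}.
Arguments runit {s X}.
Arguments runit_inv {s X}.
Arguments sym {s X Y}.
Arguments ihom {s} _ _.
Arguments ev {s X Y}.
Arguments curry {s X Y Z} _.

Record is_SMCC (V : SMCCdata) : Prop := {
  comp_idl : forall (X Y : ob V) (f : hom X Y), comp (idm Y) f = f;
  comp_idr : forall (X Y : ob V) (f : hom X Y), comp f (idm X) = f;
  comp_assoc : forall (X Y Z W : ob V) (h : hom Z W) (g : hom Y Z) (f : hom X Y),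
      comp h (comp g f) = comp (comp h g) f;
  tensm_id : forall X Y : ob V, tensm (idm X) (idm Y) = idm (tens X Y);
  tensm_comp : forall (X X' X'' Y Y' Y'' : ob V) (f' : hom X' X'') (f : hom X X')
      (g' : hom Y' Y'') (g : hom Y Y'),
      tensm (comp f' f) (comp g' g) = comp (tensm f' g') (tensm f g);
  assoc_iso1 : forall X Y Z : ob V, comp (@assoc V X Y Z) assoc_inv = idm _;
  assoc_iso2 : forall X Y Z : ob V, comp assoc_inv (@assoc V X Y Z) = idm _;
  lunit_iso1 : forall X : ob V, comp (@lunit V X) lunit_inv = idm _;
  lunit_iso2 : forall X : ob V, comp lunit_inv (@lunit V X) = idm _;
  runit_iso1 : forall X : ob V, comp (@runit V X) runit_inv = idm _;
  runit_iso2 : forall X : ob V, comp runit_inv (@runit V X) = idm _;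
  sym_inv : forall X Y : ob V, comp (@sym V Y X) sym = idm (tens X Y);
  assoc_nat : forall (X X' Y Y' Z Z' : ob V) (f : hom X X') (g : hom Y Y') (h : hom Z Z'),
      comp assoc (tensm (tensm f g) h) = comp (tensm f (tensm g h)) assoc;
  lunit_nat : forall (X Y : ob V) (f : hom X Y), comp lunit (tensm (idm unit) f) = comp f lunit;
  runit_nat : forall (X Y : ob V) (f : hom X Y), comp runit (tensm f (idm unit)) = comp f runit;
  sym_nat : forall (X X' Y Y' : ob V) (f : hom X X') (g : hom Y Y'),
      comp sym (tensm f g) = comp (tensm g f) sym;
  pentagon : forall W X Y Z : ob V,
      comp (@assoc V W X (tens Y Z)) (@assoc V (tens W X) Y Z)
      = comp (tensm (idm W) (@assoc V X Y Z))
             (comp (@assoc V W (tens X Y) Z) (tensm (@assoc V W X Y) (idm Z)));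
  triangle : forall X Y : ob V,
      comp (tensm (idm X) (@lunit V Y)) (@assoc V X unit Y)
      = tensm (@runit V X) (idm Y);
  hexagon : forall X Y Z : ob V,
      comp (@assoc V Y Z X) (comp (@sym V X (tens Y Z)) (@assoc V X Y Z))
      = comp (tensm (idm Y) (@sym V X Z))
             (comp (@assoc V Y X Z) (tensm (@sym V X Y) (idm Z)));
  ev_curry : forall (X Y Z : ob V) (g : hom (tens X Z) Y),
      comp ev (tensm (idm X) (curry g)) = g;
  curry_unique : forall (X Y Z : ob V) (h : hom Z (ihom X Y)),
      curry (comp ev (tensm (idm X) h)) = h
}.

Definition is_iso {V : SMCCdata} {X Y : ob V} (f : hom X Y) : Prop :=
  exists g : hom Y X, comp g f = idm X /\ comp f g = idm Y.

Record VCat (V : SMCCdata) := {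
  vob : Type;
  vhom : vob -> vob -> ob V;
  vcomp : forall a b c, hom (tens (vhom b c) (vhom a b)) (vhom a c);
  vid : forall a, hom unit (vhom a a)
}.
Arguments vob {V} _.
Arguments vhom {V} _ _ _.
Arguments vcomp {V} _ _ _ _.
Arguments vid {V} _ _.

Definition is_vcat {V : SMCCdata} (C : VCat V) : Prop :=
  (forall a b c d,
     comp (vcomp C a b d) (tensm (vcomp C b c d) (idm (vhom C a b)))
     = comp (vcomp C a c d) (comp (tensm (idm (vhom C c d)) (vcomp C a b c)) assoc))
  /\ (forall a b, comp (vcomp C a b b) (tensm (vid C b) (idm (vhom C a b))) = lunit)
  /\ (forall a b, comp (vcomp C a a b) (tensm (idm (vhom C a b)) (vid C a)) = runit).

Record VFunctor {V : SMCCdata} (C D : VCat V) := {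
  fob : vob C -> vob D;
  fmap : forall a b, hom (vhom C a b) (vhom D (fob a) (fob b))
}.
Arguments fob {V C D} _ _.
Arguments fmap {V C D} _ _ _.

Definition is_vfunctor {V : SMCCdata} {C D : VCat V} (F : VFunctor C D) : Prop :=
  (forall a b c,
     comp (fmap F a c) (vcomp C a b c)
     = comp (vcomp D (fob F a) (fob F b) (fob F c)) (tensm (fmap F b c) (fmap F a b)))
  /\ (forall a, comp (fmap F a a) (vid C a) = vid D (fob F a)).

Definition underlineV (V : SMCCdata) : VCat V := {|
  vob := ob V;
  vhom := fun X Y => ihom X Y;
  (* X (x) ([Y,Z] (x) [X,Y]) -> X (x) ([X,Y] (x) [Y,Z]) -> (X (x) [X,Y]) (x) [Y,Z]
     -> Y (x) [Y,Z] -> Z *)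
  vcomp := fun X Y Z =>
    curry (comp ev (comp (tensm ev (idm (ihom Y Z)))
                         (comp assoc_inv (tensm (idm X) sym))));
  vid := fun X => curry runit
|}.

Definition vop {V : SMCCdata} (C : VCat V) : VCat V := {|
  vob := vob C;
  vhom := fun a b => vhom C b a;
  vcomp := fun a b c => comp (vcomp C c b a) sym;
  vid := fun a => vid C a
|}.

Definition fullsub {V : SMCCdata} (C : VCat V) (P : vob C -> Prop) : VCat V := {|
  vob := { a : vob C | P a };
  vhom := fun a b => vhom C (proj1_sig a) (proj1_sig b);
  vcomp := fun a b c => vcomp C (proj1_sig a) (proj1_sig b) (proj1_sig c);
  vid := fun a => vid C (proj1_sig a)
|}.

Definition cot_map {V : SMCCdata} (C : VCat V) (v : ob V) (c0 k : vob C)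
  (gam : hom v (vhom C k c0)) (x : vob C) : hom (vhom C x k) (ihom v (vhom C x c0)) :=
  curry (comp (vcomp C x k c0) (tensm gam (idm (vhom C x k)))).

(* k, with counit gam, is a cotensor [v, c0] *)
Definition is_cotensor {V : SMCCdata} (C : VCat V) (v : ob V) (c0 k : vob C)
  (gam : hom v (vhom C k c0)) : Prop :=
  forall x : vob C, is_iso (cot_map C v c0 k gam x).

Definition preserves_cotensors {V : SMCCdata} (P : ob V -> Prop) {C D : VCat V}
  (F : VFunctor C D) : Prop :=
  forall (v : ob V), P v -> forall (c0 k : vob C) (gam : hom v (vhom C k c0)),
    is_cotensor C v c0 k gam ->
    is_cotensor D v (fob F c0) (fob F k) (comp (fmap F k c0) gam).

(* A system of arities: a full sub-V-category of underline V (given by the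
   predicate jP on objects) containing I and closed under (x). *)
Record Arities (V : SMCCdata) := {
  jP : ob V -> Prop;
  jP_unit : jP unit;
  jP_tens : forall X Y, jP X -> jP Y -> jP (tens X Y)
}.
Arguments jP {V} _ _.
Arguments jP_unit {V} _.

Definition Jcat {V : SMCCdata} (J : Arities V) : VCat V :=
  fullsub (underlineV V) (jP J).

Definition Jobj {V : SMCCdata} (J : Arities V) : Type := vob (Jcat J).

Definition JI {V : SMCCdata} (J : Arities V) : Jobj J := exist _ unit (jP_unit J).

(* J-theory data: a V-category with objects those of J, together with the
   identity-on-objects map tau : J^op -> T on homs. *)
Record JTheory {V : SMCCdata} (J : Arities V) := {
  th_hom : Jobj J -> Jobj J -> ob V;
  th_comp : forall a b c, hom (tens (th_hom b c) (th_hom a b)) (th_hom a c);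
  th_id : forall a, hom unit (th_hom a a);
  th_tau : forall a b, hom (vhom (vop (Jcat J)) a b) (th_hom a b)
}.
Arguments th_hom {V J} _ _ _.
Arguments th_tau {V J} _ _ _.
Arguments th_comp {V J} _ _ _ _.
Arguments th_id {V J} _ _.

Definition th_cat {V : SMCCdata} {J : Arities V} (T : JTheory J) : VCat V := {|
  vob := Jobj J;
  vhom := th_hom T;
  vcomp := th_comp T;
  vid := th_id T
|}.

Definition th_tauF {V : SMCCdata} {J : Arities V} (T : JTheory J)
  : VFunctor (vop (Jcat J)) (th_cat T) :=
  @Build_VFunctor V (vop (Jcat J)) (th_cat T) (fun a => a) (th_tau T).

Definition is_JTheory {V : SMCCdata} {J : Arities V} (T : JTheory J) : Prop :=
  is_vcat (th_cat T) /\ is_vfunctor (th_tauF T) /\ preserves_cotensors (jP J) (th_tauF T).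

(* gamma_J : J ~= underline V(I, J) = J^op(J, I) --tau--> T(J, I) *)
Definition gammaJ {V : SMCCdata} {J : Arities V} (T : JTheory J) (a : Jobj J)
  : hom (proj1_sig a) (th_hom T a (JI J)) :=
  comp (th_tau T a (JI J)) (curry (@lunit V (proj1_sig a))).

Definition is_algebra {V : SMCCdata} {J : Arities V} (T : JTheory J) {C : VCat V}
  (A : VFunctor (th_cat T) C) : Prop :=
  is_vfunctor A /\ preserves_cotensors (jP J) A.

Section AlgebraOps.
Context {V : SMCCdata} {J : Arities V} (T : JTheory J) {C : VCat V}.

Definition carrier (A : VFunctor (th_cat T) C) : vob C := fob A (JI J).

(* counit of AJ = [J, |A|]:  J --gamma_J--> T(J,I) --A_{JI}--> C(AJ, |A|) *)
Definition alg_counit (A : VFunctor (th_cat T) C) (a : Jobj J)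
  : hom (proj1_sig a) (vhom C (fob A a) (carrier A)) :=
  comp (fmap A a (JI J)) (gammaJ T a).

(* lam is the family of morphisms lambda_J : C(|A|,|B|) -> C(AJ,BJ) induced by
   the cotensors AJ = [J,|A|], BJ = [J,|B|]: i.e. composing lambda_J with the
   canonical C(AJ,BJ) -> [J, C(AJ,|B|)] gives the transpose of
   J (x) C(|A|,|B|) -> C(AJ,|A|) (x) C(|A|,|B|) -> C(AJ,|B|). *)
Definition is_lambda (A B : VFunctor (th_cat T) C)
  (lam : forall a : Jobj J,
           hom (vhom C (carrier A) (carrier B)) (vhom C (fob A a) (fob B a))) : Prop :=
  forall a : Jobj J,
    comp (cot_map C (proj1_sig a) (carrier B) (fob B a) (alg_counit B a) (fob A a)) (lam a)
    = curry (comp (vcomp C (fob A a) (carrier A) (carrier B))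
                  (comp sym (tensm (alg_counit A a) (idm (vhom C (carrier A) (carrier B)))))).

Context (A B : VFunctor (th_cat T) C)
  (lam : forall a : Jobj J,
           hom (vhom C (carrier A) (carrier B)) (vhom C (fob A a) (fob B a))).

Definition phiJK (a b : Jobj J)
  : hom (tens (th_hom T a b) (vhom C (carrier A) (carrier B))) (vhom C (fob A a) (fob B b)) :=
  comp (vcomp C (fob A a) (fob A b) (fob B b)) (comp sym (tensm (fmap A a b) (lam b))).

Definition psiJK (a b : Jobj J)
  : hom (tens (th_hom T a b) (vhom C (carrier A) (carrier B))) (vhom C (fob A a) (fob B b)) :=
  comp (vcomp C (fob A a) (fob B a) (fob B b)) (tensm (fmap B a b) (lam a)).

Definition PhiJK (a b : Jobj J) := curry (phiJK a b).
Definition PsiJK (a b : Jobj J) := curry (psiJK a b).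

(* Extraordinary V-naturality of alpha_J : v -> C(AJ, BJ) in J in T with respect
   to C(A-,B-) : T^op (x) T -> underline V:  for all J, K the two morphisms
   T(J,K) -> [v, C(AJ,BK)], namely [alpha_J,1] . C(AJ,B-)_{JK} and
   [alpha_K,1] . C(A-,BK)_{KJ}, coincide; written out, they are the transposes of
   v (x) T(J,K) -> T(J,K) (x) v -> C(BJ,BK) (x) C(AJ,BJ) -> C(AJ,BK)  and
   v (x) T(J,K) -> T(J,K) (x) v -> C(AJ,AK) (x) C(AK,BK) -> C(AJ,BK). *)
Definition extranatural_homs (v : ob V)
  (alpha : forall a : Jobj J, hom v (vhom C (fob A a) (fob B a))) : Prop :=
  forall a b : Jobj J,
    curry (comp (vcomp C (fob A a) (fob B a) (fob B b))
                (comp (tensm (fmap B a b) (alpha a)) sym))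
    = curry (comp (vcomp C (fob A a) (fob A b) (fob B b))
                  (comp sym (comp (tensm (fmap A a b) (alpha b)) sym))).

Definition valued_in_homs (v : ob V) (f : hom v (vhom C (carrier A) (carrier B))) : Prop :=
  extranatural_homs v (fun a => comp (lam a) f).

End AlgebraOps.

(* Main.v *)
Require Import Defs.

Section Gen.
Context (V : SMCCdata) (HV : is_SMCC V).

Infix "∘" := comp (at level 40, left associativity).
Infix "⊗" := tensm (at level 35).

Lemma idl {X Y : ob V} (f : hom X Y) : idm Y ∘ f = f. Proof. apply (comp_idl V HV). Qed.
Lemma idr {X Y : ob V} (f : hom X Y) : f ∘ idm X = f. Proof. apply (comp_idr V HV). Qed.
Lemma cA {X Y Z W : ob V} (h : hom Z W) (g : hom Y Z) (f : hom X Y) :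
  h ∘ (g ∘ f) = h ∘ g ∘ f. Proof. apply (comp_assoc V HV). Qed.
Lemma tid (X Y : ob V) : idm X ⊗ idm Y = idm (tens X Y). Proof. apply (tensm_id V HV). Qed.
Lemma tc {X X' X'' Y Y' Y'' : ob V} (f' : hom X' X'') (f : hom X X') (g' : hom Y' Y'') (g : hom Y Y') :
  (f' ∘ f) ⊗ (g' ∘ g) = (f' ⊗ g') ∘ (f ⊗ g). Proof. apply (tensm_comp V HV). Qed.
Lemma tcl {X X' X'' Y : ob V} (f' : hom X' X'') (f : hom X X') :
  (f' ∘ f) ⊗ idm Y = (f' ⊗ idm Y) ∘ (f ⊗ idm Y).
Proof. rewrite <- tc, idl. reflexivity. Qed.
Lemma tcr {X Y Y' Y'' : ob V} (g' : hom Y' Y'') (g : hom Y Y') :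
  idm X ⊗ (g' ∘ g) = (idm X ⊗ g') ∘ (idm X ⊗ g).
Proof. rewrite <- tc, idl. reflexivity. Qed.
Lemma tsl {X X' Y Y' : ob V} (f : hom X X') (g : hom Y Y') : f ⊗ g = (f ⊗ idm Y') ∘ (idm X ⊗ g).
Proof. rewrite <- tc, idl, idr. reflexivity. Qed.
Lemma tsr {X X' Y Y' : ob V} (f : hom X X') (g : hom Y Y') : f ⊗ g = (idm X' ⊗ g) ∘ (f ⊗ idm Y).
Proof. rewrite <- tc, idl, idr. reflexivity. Qed.

Lemma cancel_r {X Y Z : ob V} (M : hom X Y) (N : hom Y X) (L R : hom Y Z) :
  M ∘ N = idm Y -> L ∘ M = R ∘ M -> L = R.
Proof. intros H1 H2. rewrite <- (idr L), <- (idr R), <- H1, !cA, H2. reflexivity. Qed.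
Lemma cancel_l {X Y Z : ob V} (M : hom Y Z) (N : hom Z Y) (L R : hom X Y) :
  N ∘ M = idm Y -> M ∘ L = M ∘ R -> L = R.
Proof. intros H1 H2. rewrite <- (idl L), <- (idl R), <- H1, <- !cA, H2. reflexivity. Qed.

Lemma ai_nat {X X' Y Y' Z Z' : ob V} (f : hom X X') (g : hom Y Y') (h : hom Z Z') :
  assoc_inv ∘ (f ⊗ (g ⊗ h)) = ((f ⊗ g) ⊗ h) ∘ assoc_inv.
Proof.
  apply (cancel_l assoc assoc_inv). apply (assoc_iso2 V HV).
  rewrite !cA.
  rewrite (assoc_iso1 V HV), idl, <- (idr (f ⊗ (g ⊗ h))), <- (assoc_iso1 V HV X Y Z).
  rewrite !cA, (assoc_nat V HV). reflexivity.
Qed.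
Lemma li_nat {X Y : ob V} (f : hom X Y) : lunit_inv ∘ f = (idm unit ⊗ f) ∘ lunit_inv.
Proof.
  apply (cancel_l lunit lunit_inv). apply (lunit_iso2 V HV).
  rewrite !cA, (lunit_iso1 V HV), idl, (lunit_nat V HV), <- cA, (lunit_iso1 V HV), idr.
  reflexivity.
Qed.
Lemma faithI {X Y : ob V} (f g : hom X Y) : idm unit ⊗ f = idm unit ⊗ g -> f = g.
Proof.
  intro H. apply (cancel_r lunit lunit_inv). apply (lunit_iso1 V HV).
  rewrite <- !(lunit_nat V HV), H. reflexivity.
Qed.

Lemma curry_nat {X Y Z Z' : ob V} (g : hom (tens X Z) Y) (h : hom Z' Z) :
  curry g ∘ h = curry (g ∘ (idm X ⊗ h)).
Proof.
  rewrite <- (curry_unique V HV _ _ _ (curry g ∘ h)). f_equal.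
  rewrite tcr, cA, (ev_curry V HV). reflexivity.
Qed.
Lemma curry_inj {X Y Z : ob V} (g h : hom (tens X Z) Y) : curry g = curry h -> g = h.
Proof. intro H. rewrite <- (ev_curry V HV _ _ _ g), <- (ev_curry V HV _ _ _ h), H. reflexivity. Qed.
Lemma curry_ev {X Y : ob V} : curry (@ev V X Y) = idm _.
Proof. rewrite <- (curry_unique V HV _ _ _ (idm _)), tid, idr. reflexivity. Qed.
Lemma ext_ev {X Y Z : ob V} (g h : hom Z (ihom X Y)) :
  ev ∘ (idm X ⊗ g) = ev ∘ (idm X ⊗ h) -> g = h.
Proof. intro H. rewrite <- (curry_unique V HV _ _ _ g), <- (curry_unique V HV _ _ _ h), H. reflexivity. Qed.

Lemma coh_l (X Y : ob V) : lunit ∘ (@assoc V unit X Y) = lunit ⊗ idm Y.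
Proof.
  apply faithI.
  apply (cancel_r (assoc ∘ (assoc ⊗ idm Y)) ((assoc_inv ⊗ idm Y) ∘ assoc_inv)).
  { rewrite cA, <- (cA assoc), <- tcl, (assoc_iso1 V HV), tid, idr, (assoc_iso1 V HV). reflexivity. }
  rewrite tcr, <- !cA, <- (pentagon V HV).
  rewrite cA, (triangle V HV), <- (tid X Y), <- (assoc_nat V HV).
  rewrite <- (triangle V HV), tcl, !cA, (assoc_nat V HV). reflexivity.
Qed.

Lemma symsym {X Y : ob V} : @sym V Y X ∘ sym = idm (tens X Y). Proof. apply (sym_inv V HV). Qed.
Lemma aa1 {X Y Z : ob V} : @assoc V X Y Z ∘ assoc_inv = idm _. Proof. apply (assoc_iso1 V HV). Qed.
Lemma aa2 {X Y Z : ob V} : assoc_inv ∘ @assoc V X Y Z = idm _. Proof. apply (assoc_iso2 V HV). Qed.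

Lemma kL {Y Z W : ob V} (g : hom Y Z) (f : hom Z Y) (p : hom Z W) : g ∘ f = idm Z -> p ∘ g ∘ f = p.
Proof. intro H. rewrite <- cA, H, idr. reflexivity. Qed.
Lemma symsymL {X Y W : ob V} (p : hom (tens X Y) W) : p ∘ sym ∘ sym = p.
Proof. apply kL, symsym. Qed.
Lemma aa1L {X Y Z W : ob V} (p : hom (tens X (tens Y Z)) W) : p ∘ assoc ∘ assoc_inv = p.
Proof. apply kL, aa1. Qed.
Lemma aa2L {X Y Z W : ob V} (p : hom (tens (tens X Y) Z) W) : p ∘ assoc_inv ∘ assoc = p.
Proof. apply kL, aa2. Qed.
Lemma tlL {X X' Y W : ob V} (g : hom X' X) (f : hom X X') (p : hom (tens X Y) W) :
  g ∘ f = idm X -> p ∘ (g ⊗ idm Y) ∘ (f ⊗ idm Y) = p.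
Proof. intro H. apply kL. rewrite <- tcl, H, tid. reflexivity. Qed.
Lemma trL {X X' Y W : ob V} (g : hom X' X) (f : hom X X') (p : hom (tens Y X) W) :
  g ∘ f = idm X -> p ∘ (idm Y ⊗ g) ∘ (idm Y ⊗ f) = p.
Proof. intro H. apply kL. rewrite <- tcr, H, tid. reflexivity. Qed.

Lemma hex2 (X Y Z : ob V) :
  @assoc V Z X Y ∘ (@sym V X Z ⊗ idm Y) ∘ assoc_inv ∘ (idm X ⊗ @sym V Y Z)
  = @sym V (tens X Y) Z ∘ assoc_inv.
Proof.
  apply (cancel_r (@assoc V X Y Z ∘ (sym ∘ @assoc V Z X Y)) (assoc_inv ∘ sym ∘ assoc_inv)).
  { rewrite !cA, aa1L, symsymL, aa1. reflexivity. }
  transitivity (@assoc V Z X Y).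
  - rewrite (hexagon V HV), !cA, (trL _ _ _ symsym), aa2L, (tlL _ _ _ symsym). reflexivity.
  - rewrite !cA, aa2L, symsym, idl. reflexivity.
Qed.

Lemma tcg {X X' X'' Y Y' : ob V} (f' : hom X' X'') (f : hom X X') (g : hom Y Y') :
  (f' ∘ f) ⊗ g = (f' ⊗ g) ∘ (f ⊗ idm Y).
Proof. rewrite <- tc, idr. reflexivity. Qed.
Lemma tcg2 {X X' Y Y' Y'' : ob V} (f : hom X X') (g' : hom Y' Y'') (g : hom Y Y') :
  f ⊗ (g' ∘ g) = (f ⊗ g') ∘ (idm X ⊗ g).
Proof. rewrite <- tc, idr. reflexivity. Qed.
Lemma tcg3 {X X' Y Y' Y'' : ob V} (f : hom X X') (g' : hom Y' Y'') (g : hom Y Y') :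
  f ⊗ (g' ∘ g) = (idm X' ⊗ g') ∘ (f ⊗ g).
Proof. rewrite <- tc, idl. reflexivity. Qed.
Lemma tcg4 {X X' X'' Y Y' : ob V} (f' : hom X' X'') (f : hom X X') (g : hom Y Y') :
  (f' ∘ f) ⊗ g = (f' ⊗ idm Y') ∘ (f ⊗ g).
Proof. rewrite <- tc, idl. reflexivity. Qed.

Definition vcU (X Y Z : ob V) : hom (tens (ihom Y Z) (ihom X Y)) (ihom X Z) :=
    curry (comp ev (comp (tensm ev (idm (ihom Y Z)))
                         (comp assoc_inv (tensm (idm X) sym)))).

Lemma cot_gen (b x : ob V) :
  is_iso (curry (comp (comp (vcU unit b x) sym) (tensm (curry (@lunit V b)) (idm (ihom b x))))).
Proof.
  set (Cot := curry (comp (comp (vcU unit b x) sym) (tensm (curry (@lunit V b)) (idm (ihom b x))))).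
  assert (K1 : ev ∘ (idm unit ⊗ (ev ∘ (idm b ⊗ Cot))) = lunit ∘ (idm unit ⊗ ev)).
  { unfold Cot, vcU. rewrite (ev_curry V HV), !tcr, !cA, (ev_curry V HV), (trL _ _ _ symsym).
    rewrite <- (cA _ assoc_inv), ai_nat, cA, <- (cA _ (ev ⊗ idm _)), <- tcl, (ev_curry V HV).
    rewrite <- coh_l, !cA, aa1L, (lunit_nat V HV). reflexivity. }
  exists (curry (ev ∘ (idm unit ⊗ ev) ∘ lunit_inv)). split.
  - apply ext_ev. rewrite tid, idr, tcr, cA, (ev_curry V HV).
    rewrite <- (cA _ lunit_inv), li_nat, cA, <- (cA ev), <- tcr, K1.
    rewrite (lunit_nat V HV), (kL _ _ _ (lunit_iso1 V HV _)). reflexivity.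
  - apply ext_ev. rewrite tid, idr, tcr, cA.
    apply ext_ev. rewrite tcr, cA, K1, <- cA, <- tcr, (ev_curry V HV).
    rewrite (lunit_nat V HV), <- cA, (lunit_iso2 V HV), idr. reflexivity.
Qed.
Section Main.
Context (J : Arities V)
  (T : JTheory J) (HT : is_JTheory T)
  (C : VCat V) (HC : is_vcat C)
  (A B : VFunctor (th_cat T) C) (HA : is_algebra T A) (HB : is_algebra T B)
  (lam : forall a : Jobj J,
           hom (vhom C (carrier T A) (carrier T B)) (vhom C (fob A a) (fob B a)))
  (v : ob V) (f : hom v (vhom C (carrier T A) (carrier T B))).

Lemma cot_Jop (b : Jobj J) : is_cotensor (vop (Jcat J)) (proj1_sig b) (JI J) b (curry (@lunit V (proj1_sig b))).
Proof. intro x. exact (cot_gen (proj1_sig b) (proj1_sig x)). Qed.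

Definition Eq (a b : Jobj J) : Prop :=
  vcomp C (fob A a) (fob B a) (fob B b) ∘ (fmap B a b ⊗ (lam a ∘ f))
  = vcomp C (fob A a) (fob A b) (fob B b) ∘ (sym ∘ (fmap A a b ⊗ (lam b ∘ f))).

Lemma extra_iff : valued_in_homs T A B lam v f <-> forall a b, Eq a b.
Proof.
  unfold valued_in_homs, extranatural_homs, Eq. split; intros H a b.
  - specialize (H a b). apply curry_inj in H; auto.
    apply (cancel_r sym sym); [apply symsym; auto|].
    rewrite <- !cA, H; auto.
  - rewrite !cA, H, !cA; auto.
Qed.

Lemma phipsi_iff (a : Jobj J) :
  comp (PhiJK T A B lam a (JI J)) f = comp (PsiJK T A B lam a (JI J)) f <-> Eq a (JI J).
Proof.
  unfold PhiJK, PsiJK, phiJK, psiJK, Eq. rewrite !curry_nat, <- !cA, <- !tc, !idr; auto.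
  split; intro H.
  - symmetry. apply curry_inj in H; auto.
  - f_equal. symmetry; exact H.
Qed.

Lemma mono (a b : Jobj J) {X : ob V} (g h : hom X (vhom C (fob A a) (fob B b))) :
  vcomp C (fob A a) (fob B b) (fob B (JI J)) ∘ (alg_counit T B b ⊗ g)
  = vcomp C (fob A a) (fob B b) (fob B (JI J)) ∘ (alg_counit T B b ⊗ h) -> g = h.
Proof.
  intro H.
  assert (cotT : is_cotensor (th_cat T) (proj1_sig b) (JI J) b (gammaJ T b))
    by exact (proj2 (proj2 HT) _ (proj2_sig b) _ _ _ (cot_Jop b)).
  assert (cotB : is_cotensor C (proj1_sig b) (fob B (JI J)) (fob B b) (alg_counit T B b))
    by exact (proj2 HB _ (proj2_sig b) _ _ _ cotT).
  destruct (cotB (fob A a)) as [k [Hk1 Hk2]].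
  apply (cancel_l _ k _ _ Hk1). unfold cot_map. rewrite !curry_nat, <- !cA, <- !tc, !idl, !idr; auto.
  f_equal; exact H.
Qed.

Lemma hex2R (X Y Z : ob V) :
  @assoc V Z X Y ∘ ((@sym V X Z ⊗ idm Y) ∘ (assoc_inv ∘ (idm X ⊗ @sym V Y Z)))
  = @sym V (tens X Y) Z ∘ assoc_inv.
Proof. rewrite !cA. apply hex2. Qed.

Lemma assocC (w x y z : vob C) :
  vcomp C w x z ∘ (vcomp C x y z ⊗ idm _)
  = vcomp C w y z ∘ (idm _ ⊗ vcomp C w x y) ∘ assoc.
Proof. destruct HC as [Ha _]. rewrite Ha, cA. reflexivity. Qed.

Lemma assocC' (w x y z : vob C) :
  vcomp C w y z ∘ (idm _ ⊗ vcomp C w x y)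
  = vcomp C w x z ∘ (vcomp C x y z ⊗ idm _) ∘ assoc_inv.
Proof.
  destruct HC as [Ha _]. rewrite Ha, <- !cA, aa1, idr; auto.
Qed.

Lemma funcB (x y z : Jobj J) :
  fmap B x z ∘ th_comp T x y z = vcomp C _ _ _ ∘ (fmap B y z ⊗ fmap B x y).
Proof. exact (proj1 (proj1 HB) x y z). Qed.
Lemma funcA (x y z : Jobj J) :
  fmap A x z ∘ th_comp T x y z = vcomp C _ _ _ ∘ (fmap A y z ⊗ fmap A x y).
Proof. exact (proj1 (proj1 HA) x y z). Qed.

Lemma main_back (HI : forall a, Eq a (JI J)) (a b : Jobj J) : Eq a b.
Proof.
  unfold Eq. apply (mono a b). unfold alg_counit, carrier.
  pose proof (HI a) as Ha. unfold Eq, carrier in Ha.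
  set (g := gammaJ T b). set (mI := lam (JI J) ∘ f).
  transitivity (vcomp C _ _ _ ∘ (mI ⊗ (fmap A a (JI J) ∘ (th_comp T a b (JI J) ∘ (g ⊗ idm _)))) ∘ sym ∘ assoc_inv).
  - rewrite tc, (tsr (fmap B b (JI J))), !cA, assocC'.
    rewrite <- (cA _ (fmap B b (JI J) ⊗ idm _)), <- tc, idl.
    rewrite <- (cA _ assoc_inv), ai_nat, cA.
    rewrite <- (cA _ (vcomp C _ _ _ ⊗ idm _)), <- tc, idl.
    rewrite (tcg (fmap B b (JI J)) g (fmap B a b)), (cA (vcomp C _ _ _)), <- funcB.
    rewrite <- (cA (fmap B a (JI J))), (tcg (fmap B a (JI J))), (cA (vcomp C _ _ _)), Ha.
    rewrite (sym_nat V HV), !cA, <- (cA _ sym), (sym_nat V HV), cA, <- (cA _ (_ ⊗ fmap A a (JI J))), <- tc, idr.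
    rewrite !cA. reflexivity.
  - symmetry. pose proof (HI b) as Hb. unfold Eq, carrier in Hb.
    rewrite (sym_nat V HV), (cA (vcomp C (fob A a) (fob A b) (fob B b))).
    rewrite (tcg2 (fmap B b (JI J) ∘ g)), (tcg3 (fmap B b (JI J) ∘ g)), !cA, assocC'.
    rewrite <- (cA _ assoc_inv), ai_nat, cA, <- (cA _ (vcomp C _ _ _ ⊗ idm _)), <- tc, idl.
    rewrite (tcg (fmap B b (JI J)) g), (cA (vcomp C (fob A b) _ _)), Hb, (sym_nat V HV).
    rewrite <- (cA (vcomp C (fob A b) _ _)), <- (cA _ sym), (sym_nat V HV), (cA (_ ⊗ fmap A b (JI J))), <- tc, idr.
    rewrite (cA (vcomp C (fob A b) _ _)), (tcg (_ ∘ _) sym (fmap A a b)), (tcg4 (vcomp C (fob A b) _ _)), !cA.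
    rewrite assocC, <- (cA _ assoc), (assoc_nat V HV), cA, <- (cA _ (idm _ ⊗ _)), <- tc, idl.
    rewrite (tcg (fmap A b (JI J)) g), (cA (vcomp C (fob A a) (fob A b) (fob A (JI J)))), <- funcA.
    rewrite <- !cA, hex2R, !cA. reflexivity.
Qed.
End Main.
End Gen.

Theorem proposition4p10
  (V : SMCCdata) (HV : is_SMCC V) (J : Arities V)
  (T : JTheory J) (HT : is_JTheory T)
  (C : VCat V) (HC : is_vcat C)
  (A B : VFunctor (th_cat T) C) (HA : is_algebra T A) (HB : is_algebra T B)
  (lam : forall a : Jobj J,
           hom (vhom C (carrier T A) (carrier T B)) (vhom C (fob A a) (fob B a)))
  (Hlam : is_lambda T A B lam)
  (v : ob V) (f : hom v (vhom C (carrier T A) (carrier T B))) :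
  valued_in_homs T A B lam v f <->
  (forall a : Jobj J,
     comp (PhiJK T A B lam a (JI J)) f = comp (PsiJK T A B lam a (JI J)) f).
Proof.
  split.
  - intros H a. apply (phipsi_iff V HV J T C A B lam v f a).
    apply (proj1 (extra_iff V HV J T C A B lam v f) H).
  - intro H. apply (proj2 (extra_iff V HV J T C A B lam v f)).
    apply (main_back V HV J T HT C HC A B HA HB lam v f).
    intro a. apply (proj1 (phipsi_iff V HV J T C A B lam v f a)), H.
Qed.
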